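(* Let $\lambda$ be a finite or countable signature. A sequence $(\mathbf A_n)_{n\in\mathbb N}$ of finite $\lambda$-structures is FO-convergent if and only if the sequence $(\mu_{\mathbf A_n})_{n\in\mathbb N}$ of measures on $S_\lambda$ is weakly-$\ast$ convergent. Moreover, if $\mu_{\mathbf A_n}$ converges weakly-$\ast$ to $\mu$, then for every $\phi\in\mathrm{FO}(\lambda)$, $$\int_{S_\lambda}\mathbf 1_{K(\phi)}\,\mathrm d\mu=\lim_{n\to\infty}\langle\phi,\mathbf A_n\rangle.$$
   Context: $\mathrm{FO}(\lambda)$ denotes first-order formulas in signature $\lambda$ with free variables from $x_1,x_2,\dots$. For $\phi$ with free variables among $x_1,\dots,x_p$ and a finite $\lambda$-structure $\mathbf A$ with domain $A$, $\langle\phi,\mathbf A\rangle=|\{(v_1,\dots,v_p)\in A^p:\mathbf A\models\phi(v_1,\dots,v_p)\}|/|A|^p$; $(\mathbf A_n)$ is FO-convergent if $\langle\phi,\mathbf A_n\rangle$ converges for every $\phi\in\mathrm{FO}(\lambda)$. $S_\lambda$ is the Stone space (space of ultrafilters) of the Boolean algebra of formulas of $\mathrm{FO}(\lambda)$ modulo logical equivalence; for $\phi\in\mathrm{FO}(\lambda)$, $K(\phi)$ is the clopen set of ultrafilters containing the class of $\phi$. For a finite $\lambda$-structure $\mathbf A$, $\mu_{\mathbf A}$ is the regular Borel probability measure on $S_\lambda$ with $\mu_{\mathbf A}(K(\phi))=\langle\phi,\mathbf A\rangle$ for all $\phi$. Weak-$\ast$ convergence of measures $\mu_n$ means convergence of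 $\int f\,\mathrm d\mu_n$ for every continuous $f:S_\lambda\to\mathbb R$. *)

(* Defs.v *)
From HB Require Import structures.
From mathcomp Require Import all_boot all_order all_algebra.
From mathcomp Require Import all_classical all_reals ereal.
From mathcomp Require Import topology normedtype sequences numfun measure lebesgue_integral probability.
Set Implicit Arguments. Unset Strict Implicit. Unset Printing Implicit Defensive.
Import Order.TTheory GRing.Theory Num.Theory numFieldNormedType.Exports.
Local Open Scope classical_set_scope.
Local Open Scope ring_scope.

Section FO.
Variables (S : countType) (ar : S -> nat).

(* First-order formulas with equality; variables are x_0, x_1, ... (nat).
   Other connectives/quantifiers are definable from these. *)
Inductive FOform : Type :=
  | FFalse
  | FRel (s : S) of (ar s).-tuple nat
  | FEq of nat & nat
  | FNeg of FOform
  | FAnd of FOform & FOform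
  | FEx of nat & FOform.

Definition FTrue := FNeg FFalse.

Fixpoint fv (f : FOform) : seq nat :=
  match f with
  | FFalse => [::]
  | FRel _ t => val t
  | FEq i j => [:: i; j]
  | FNeg g => fv g
  | FAnd g h => fv g ++ fv h
  | FEx i g => seq.filter (fun k => k != i) (fv g)
  end.

Definition fvb (f : FOform) : nat := foldr maxn 0%N (map succn (fv f)).

Record structure := Structure {
  carrier :> Type;
  cpoint : carrier;
  crel : forall s, (ar s).-tuple carrier -> Prop }.

Fixpoint sat (M : structure) (e : nat -> M) (f : FOform) : Prop :=
  match f with
  | FFalse => False
  | FRel s t => @crel M s (map_tuple e t)
  | FEq i j => e i = e j
  | FNeg g => ~ sat e g
  | FAnd g h => sat e g /\ sat e h
  | FEx i g => exists a : M, sat (fun k => if k == i then a else e k) g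
  end.

Definition entails (f g : FOform) : Prop :=
  forall (M : structure) (e : nat -> M), sat e f -> sat e g.

(* Ultrafilters of the Lindenbaum-Tarski algebra FO(lambda)/equivalence,
   represented by the set of formulas whose class belongs to the
   ultrafilter (such a set is closed under logical equivalence by uf_up). *)
Record ultrafilter := Ultrafilter {
  uf : FOform -> Prop;
  uf_true : uf FTrue;
  uf_false : ~ uf FFalse;
  uf_up : forall f g, uf f -> entails f g -> uf g;
  uf_and : forall f g, uf f -> uf g -> uf (FAnd f g);
  uf_max : forall f, uf f \/ uf (FNeg f) }.

(* the one-point structure, used to exhibit a point of the Stone space *)
Definition pt_structure : structure :=
  @Structure unit tt (fun _ _ => False).

Definition uf0_pred (f : FOform) : Prop := sat (M := pt_structure) (fun _ => tt) f.

Lemma uf0_true : uf0_pred FTrue. Proof. by move=> []. Qed.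
Lemma uf0_false : ~ uf0_pred FFalse. Proof. by []. Qed.
Lemma uf0_up f g : uf0_pred f -> entails f g -> uf0_pred g.
Proof. by move=> Hf H; apply: H. Qed.
Lemma uf0_and f g : uf0_pred f -> uf0_pred g -> uf0_pred (FAnd f g).
Proof. by move=> Hf Hg; split. Qed.
Lemma uf0_max f : uf0_pred f \/ uf0_pred (FNeg f).
Proof. by case: (pselect (uf0_pred f)) => H; [left|right]. Qed.

Definition uf0 : ultrafilter :=
  Ultrafilter uf0_true uf0_false uf0_up uf0_and uf0_max.

HB.instance Definition _ := gen_eqMixin FOform.
HB.instance Definition _ := gen_choiceMixin FOform.
HB.instance Definition _ := isPointed.Build FOform FFalse.

HB.instance Definition _ := gen_eqMixin ultrafilter.
HB.instance Definition _ := gen_choiceMixin ultrafilter.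
HB.instance Definition _ := isPointed.Build ultrafilter uf0.

Definition Kset (f : FOform) : set ultrafilter := [set U | uf U f].

HB.instance Definition _ :=
  isSubBaseTopological.Build ultrafilter (@setT FOform) Kset.

Definition Stone := g_sigma_algebraType (@open ultrafilter).

Definition K (f : FOform) : set Stone := Kset f.

Record finstructure := FinStructure {
  fdom : finType;
  fpoint : fdom;
  frel : forall s, (ar s).-tuple fdom -> bool }.

Definition fin_to_structure (A : finstructure) : structure :=
  @Structure (fdom A) (fpoint A) (fun s t => frel t).
Coercion fin_to_structure : finstructure >-> structure.

Definition env (A : finstructure) (p : nat) (v : p.-tuple (fdom A)) :
  nat -> fdom A := fun k => nth (fpoint A) v k.

(* Stone pairing <phi, A> : probability that a uniformly random assignment
   of x_0..x_(p-1) in A satisfies phi, p = fvb phi *)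
Definition pairing (R : realType) (f : FOform) (A : finstructure) : R :=
  (#|[set v : (fvb f).-tuple (fdom A) | `[< @sat A (env v) f >] ]|%:R
   / (#|fdom A| ^ fvb f)%:R)%R.

Definition FO_convergent (R : realType) (A : nat -> finstructure) : Prop :=
  forall f : FOform, cvg ((fun n => pairing R f (A n)) @ \oo).

Definition regular_measure (R : realType) (mu : {measure set Stone -> \bar R}) :=
  forall B : set Stone, measurable B ->
    mu B = ereal_sup [set mu C | C in
                      [set C : set ultrafilter | compact C /\ C `<=` B]] /\
    mu B = ereal_inf [set mu O | O in
                      [set O : set ultrafilter | open O /\ B `<=` O]].

Definition weak_star_convergent (R : realType) (mu : nat -> probability Stone R) :=
  forall h : ultrafilter -> R, continuous h ->
    cvg ((fun n => Rintegral (mu n) setT h) @ \oo).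

Definition weak_star_converges_to (R : realType)
    (mu : nat -> probability Stone R) (nu : probability Stone R) :=
  forall h : ultrafilter -> R, continuous h ->
    (fun n => Rintegral (mu n) setT h) @ \oo --> Rintegral nu setT h.

End FO.

(* Main.v *)
Require Import Defs.
From HB Require Import structures.
From mathcomp Require Import all_boot all_order all_algebra.
From mathcomp Require Import all_classical all_reals ereal.
From mathcomp Require Import topology normedtype sequences numfun measure lebesgue_integral probability.
From mathcomp Require Import lebesgue_stieltjes_measure measurable_realfun lebesgue_measure.
From mathcomp Require Import ring.
Import Order.TTheory GRing.Theory Num.Theory numFieldNormedType.Exports.
Local Open Scope classical_set_scope.
Local Open Scope ring_scope.
Section S.
Set Implicit Arguments.
Variables (S : countType) (ar : S -> nat).
Local Notation F := (FOform ar).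
Local Notation U := (ultrafilter ar).
Implicit Types (f g : F).

Lemma ufAnd (u : U) f g : uf u (FAnd f g) <-> uf u f /\ uf u g.
Proof.
split; last by case=> ??; apply: uf_and.
move=> H; split; apply: (uf_up H) => M e []//.
Qed.

Lemma ufNeg (u : U) f : uf u (FNeg f) <-> ~ uf u f.
Proof.
split; last by case: (uf_max u f).
move=> H1 H2; apply: (@uf_false _ _ u); apply: (uf_up (uf_and H2 H1)).
by move=> M e /= [].
Qed.

Definition conj (l : seq F) := foldr (@FAnd _ ar) (FTrue ar) l.

Lemma uf_conj (u : U) l : uf u (conj l) <-> forall f, f \in l -> uf u f.
Proof.
elim: l => [|g l IH] /=; first by split=> // _; apply: uf_true.
rewrite ufAnd IH; split.
  by case=> Hg Hl f; rewrite inE => /orP[/eqP->|/Hl].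
by move=> H; split; [apply: H; rewrite inE eqxx | move=> f Hf; apply: H; rewrite inE Hf orbT].
Qed.

Lemma nbhsK (u : U) (A : set U) : nbhs u A -> exists f, uf u f /\ Kset f `<=` A.
Proof.
move=> [B [oB Bu BA]].
move: oB => [D' sD' eB]. rewrite -eB in Bu BA.
case: Bu => i Di Ei.
have [E _ eE] := sD' _ Di. rewrite -eE in Ei.
exists (conj (finmap.enum_fset E : seq F)); split.
  apply/uf_conj => f fE; apply: Ei; exact: fE.
move=> v /uf_conj Hv; apply: BA; exists i => //.
rewrite -eE /= => j jE; exact: Hv.
Qed.

Lemma KsetAnd f g : Kset (FAnd f g) = Kset f `&` Kset g.
Proof. by apply/seteqP; split=> u; rewrite /Kset /= ufAnd. Qed.

Lemma KsetNeg f : Kset (FNeg f) = ~` Kset f.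
Proof. by apply/seteqP; split=> u; rewrite /Kset /= ufNeg. Qed.

Lemma KsetT : Kset (FTrue ar) = setT.
Proof. by apply/seteqP; split=> u //= _; apply: uf_true. Qed.

Lemma openK f : open (Kset f).
Proof.
rewrite /open/=; exists [set Kset f].
  by move=> _ ->; apply: finI_from1.
by rewrite bigcup_set1.
Qed.

Lemma closedK f : closed (Kset f).
Proof. by rewrite -[Kset f]setCK -KsetNeg; apply: open_closedC; apply: openK. Qed.

Lemma indic_cont (R : realType) f : continuous (\1_(Kset f) : U -> R).
Proof.
apply/continuousP => A _; rewrite preimage_indic.
case: ifP => _; case: ifP => _; [exact: openT|exact: openK| |exact: open0].
by have := openK (FNeg f); rewrite KsetNeg.
Qed.

Lemma compactT : compact [set: U].
Proof.
rewrite compact_ultra => G GU _.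
pose P f := G (Kset f).
have Pup : forall f g, P f -> entails f g -> P g.
  move=> f g Pf fg; apply: filterS Pf => u uf; exact: uf_up uf fg.
have Pt : P (FTrue ar) by rewrite /P KsetT; apply: filterT.
have Pf : ~ P (FFalse ar).
  rewrite /P (_ : Kset _ = set0); first exact: filter_not_empty.
  by apply/seteqP; split=> u //=; apply: uf_false.
have Pa : forall f g, P f -> P g -> P (FAnd f g).
  by move=> f g ??; rewrite /P KsetAnd; apply: filterI.
have Pm : forall f, P f \/ P (FNeg f).
  by move=> f; rewrite /P KsetNeg; apply: in_ultra_setVsetC.
exists (Ultrafilter Pt Pf Pup Pa Pm); split => //.
move=> A /nbhsK [f [Hf HA]]; exact: (filterS HA Hf).
Qed.

Section Meas.
Variable R : realType.
Variable mu : probability (Stone ar) R.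
Implicit Types h : U -> R.

Lemma measK f : measurable (K f : set (Stone ar)).
Proof. by apply: sub_sigma_algebra; exact: openK. Qed.

Lemma cont_meas h : continuous h -> measurable_fun [set: Stone ar] (fun x : Stone ar => h x).
Proof.
move=> /continuousP hc.
apply: (measurability _ (RGenOpens.measurableE R)).
move=> _ [_ [a [b ->] <-]]; apply: measurableI => //.
by apply: sub_sigma_algebra; apply: hc; exact: interval_open.
Qed.

Lemma cont_bounded h : continuous h -> exists M, forall u, `|h u| <= M.
Proof.
move=> hc.
have := compact_bounded (continuous_compact (@continuous_subspaceT _ _ setT h hc) compactT).
move=> [M [_ HM]].
exists (`|M| + 1) => u; apply: (HM (`|M| + 1)); first by rewrite ltr_pwDr// ler_norm.
by exists u.
Qed.

Lemma cont_int h : continuous h -> mu.-integrable setT (fun x : Stone ar => (h x)%:E).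
Proof.
move=> hc; have [M HM] := cont_bounded hc.
apply: (@le_integrable _ _ _ mu setT measurableT _ (EFin \o cst M)).
- by apply: measurableT_comp => //; exact: cont_meas.
- move=> u _ /=; rewrite lee_fin.
  by apply: (le_trans (HM u)); exact: ler_norm.
exact: finite_measure_integrable_cst.
Qed.

Lemma RintK f : Rintegral mu setT (\1_(K f)) = fine (mu (K f)).
Proof. by rewrite /Rintegral integral_indic ?setIT //; exact: measK. Qed.
Arguments cont_int {h}.
Arguments cont_bounded {h}.
Arguments cont_meas {h}.

Definition simp (L : seq (F * R)) : U -> R :=
  fun u => \sum_(p <- L) p.2 * \1_(Kset p.1) u.

Lemma simp_cons p L : simp (p :: L) = (cst p.2 \* \1_(Kset p.1)) + simp L.
Proof. by apply/funext => u; rewrite /simp big_cons. Qed.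

Lemma simp_consE p L u : simp (p :: L) u = p.2 * \1_(Kset p.1) u + simp L u.
Proof. by rewrite /simp big_cons. Qed.

Lemma simp_cont L : continuous (simp L).
Proof.
elim: L => [|p L IH].
  rewrite (_ : simp [::] = cst 0); first exact: cst_continuous.
  by apply/funext => u; rewrite /simp big_nil.
rewrite simp_cons => x; apply: continuousD; last exact: IH.
apply: continuousM; first exact: cst_continuous.
exact: indic_cont.
Qed.

Lemma indK1 f u : uf u f -> \1_(Kset f) u = 1 :> R.
Proof. by move=> H; rewrite indicE mem_set. Qed.

Lemma indK0 f u : ~ uf u f -> \1_(Kset f) u = 0 :> R.
Proof. by move=> H; rewrite indicE memNset. Qed.

Definition rmap f (L : seq (F * R)) := map (fun p => (FAnd (FNeg f) p.1, p.2)) L.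

Lemma simp_rmap1 f L u : uf u f -> simp (rmap f L) u = 0.
Proof.
move=> H; rewrite /simp big_map big1 // => p _ /=.
by rewrite indK0 ?mulr0 // ufAnd ufNeg; case.
Qed.

Lemma simp_rmap0 f L u : ~ uf u f -> simp (rmap f L) u = simp L u.
Proof.
move=> H; rewrite /simp big_map; apply: eq_bigr => p _ /=.
case: (pselect (uf u p.1)) => Hp.
  by rewrite !indK1 // ufAnd ufNeg.
by rewrite !indK0 // ufAnd ufNeg; case.
Qed.

Fixpoint mk (l : seq (F * R)) : seq (F * R) :=
  if l is p :: l' then p :: rmap p.1 (mk l') else [::].

Lemma mk_approx h (d : R) l u :
  (forall p, p \in l -> uf u p.1 -> `|h u - p.2| < d) ->
  ((exists2 p, p \in l & uf u p.1) -> `|h u - simp (mk l) u| < d) /\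
  ((forall p, p \in l -> ~ uf u p.1) -> simp (mk l) u = 0).
Proof.
elim: l => [|p l IH] Hl.
  split; first by case.
  by rewrite /simp big_nil.
have IH' := IH (fun q ql => Hl q (@mem_behead _ (p :: l) q ql)).
rewrite /= !simp_consE /=.
case: (pselect (uf u p.1)) => Hp.
  rewrite indK1 // simp_rmap1 // mulr1 addr0; split.
    by move=> _; apply: Hl => //; rewrite mem_head.
  by move=> H; exfalso; apply: (H p) => //; rewrite mem_head.
rewrite indK0 // simp_rmap0 // mulr0 add0r; split.
  move=> [q]; rewrite inE => /orP [/eqP ->|ql] Hq //.
  by apply: IH'.1; exists q.
by move=> H; apply: IH'.2 => q ql; apply: H; rewrite inE ql orbT.
Qed.

Lemma Rint_simp L :
  Rintegral mu setT (simp L) = \sum_(p <- L) p.2 * fine (mu (K p.1)).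
Proof.
elim: L => [|p L IH].
  rewrite big_nil (_ : simp [::] = cst 0); last first.
    by apply/funext => u; rewrite /simp big_nil.
  by rewrite Rintegral_cst // mul0r.
rewrite simp_cons big_cons -IH.
rewrite (@RintegralD _ _ _ mu setT (cst p.2 \* \1_(Kset p.1)) (simp L)) //; last first.
  - apply: cont_int; exact: simp_cont.
  - apply: cont_int => x; apply: continuousM; first exact: cst_continuous.
    exact: indic_cont.
congr (_ + _).
rewrite (@RintegralZl _ _ _ mu setT (\1_(Kset p.1)) p.2) //; last first.
  apply: cont_int; exact: indic_cont.
by rewrite RintK.
Qed.

Lemma est h s (d : R) : continuous h -> continuous s ->
  (forall u, `|h u - s u| <= d) ->
  `|Rintegral mu setT h - Rintegral mu setT s| <= d.
Proof.
move=> hc sc hs.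
have hsc : continuous (fun u => h u - s u) by move=> x; exact: (cvgB (hc x) (sc x)).
have ahsc : continuous (fun u => `|h u - s u|).
  by move=> x; exact: (cvg_norm (hsc x)).
rewrite -(@RintegralB _ _ _ mu setT h s) //; [|exact: cont_int|exact: cont_int].
have H1 := (@le_normr_Rintegral _ _ _ mu setT (fun u => h u - s u) measurableT (cont_int hsc)).
have cc : continuous (cst d : U -> R) by exact: cst_continuous.
have H2 := @le_Rintegral _ _ _ mu setT (fun u => `|h u - s u|) (cst d) measurableT
  (cont_int ahsc) (cont_int cc).
have H3 := H2 (fun x _ => hs x).
rewrite Rintegral_cst // in H3. have p1 : fine (mu [set: Stone ar]) = 1 by rewrite probability_setT. rewrite p1 mulr1 in H3.
exact: le_trans H1 H3.
Qed.

Lemma approx h (d : R) : continuous h -> 0 < d ->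
  exists L, forall u, `|h u - simp L u| < d.
Proof.
move=> hc d0.
have H1 : forall u, exists f, uf u f /\ forall v, uf v f -> `|h v - h u| < d.
  move=> u; have := hc u; move/cvgrPdist_lt => /(_ d d0) Hn.
  have [f [Hf Hsub]] := nbhsK Hn.
  by exists f; split => // v /Hsub /=; rewrite distrC.
have [g Hg] := choice H1.
have cT := compactT; rewrite compact_cover in cT.
have [D' _ HD'] := cT U setT (fun u => Kset (g u)) (fun i _ => openK (g i))
  (fun u _ => ex_intro2 _ _ u I (Hg u).1).

set l := [seq (g v, h v) | v <- finmap.enum_fset D'].
exists (mk l) => u.
have Hl : forall p, p \in l -> uf u p.1 -> `|h u - p.2| < d.
  by move=> p /mapP [v _ ->] /= Hu; exact: (Hg v).2.
have [Ha _] := @mk_approx h d l u Hl.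
apply: Ha; have [v Dv Hv] := HD' u I; exists (g v, h v) => //.
by apply/mapP; exists v.
Qed.

End Meas.
End S.

Lemma cvg_sumL (R : realType) (T : Type) (L : seq (T * R)) (a : T -> nat -> R) :
  (forall t, cvg (a t @ \oo)) -> cvg ((fun n => \sum_(p <- L) p.2 * a p.1 n) @ \oo).
Proof.
move=> Ha; elim: L => [|p L IH].
  rewrite (_ : (fun n => _) = cst 0); first exact: is_cvg_cst.
  by apply/funext => n; rewrite big_nil.
rewrite (_ : (fun n => _) = (cst p.2 \* a p.1) + (fun n => \sum_(q <- L) q.2 * a q.1 n)).
  apply: is_cvgD => //; apply: is_cvgM => //; exact: is_cvg_cst.
by apply/funext => n; rewrite big_cons.
Qed.

Theorem theorem2p16 (S : countType) (ar : S -> nat) (R : realType)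
    (A : nat -> finstructure ar) (mu : nat -> probability (Stone ar) R)
    (Hmu : forall n (f : FOform ar), mu n (K f) = (pairing R f (A n))%:E)
    (Hreg : forall n, regular_measure (mu n)) :
  (FO_convergent R A <-> weak_star_convergent mu) /\
  (forall nu : probability (Stone ar) R, weak_star_converges_to mu nu ->
     forall f : FOform ar,
       (fun n => pairing R f (A n)) @ \oo -->
         Rintegral nu setT (\1_(K f) : Stone ar -> R)).
Proof.
have key : forall f, (fun n => Rintegral (mu n) setT (\1_(K f) : Stone ar -> R))
    = (fun n => pairing R f (A n)).
  by move=> f; apply/funext => n; rewrite RintK Hmu.
split; last first.
  move=> nu Hnu f.
  have H := Hnu (\1_(K f)) (@indic_cont _ _ R f).
  by rewrite key in H.
split; last first.
  move=> Hw f; have H := Hw (\1_(K f)) (@indic_cont _ _ R f).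
  by rewrite key in H.
move=> HFO h hc.
have cJ : forall L : seq (FOform ar * R),
    cvg ((fun n => \sum_(p <- L) p.2 * pairing R p.1 (A n)) @ \oo).
  move=> L; exact: (@cvg_sumL R _ L (fun f n => pairing R f (A n))).
apply/cauchy_cvgP; apply: cauchy_exP => e e0.
have d0 : 0 < e / 3 by rewrite divr_gt0.
have [L HL] := approx (e / 3) hc d0.
set J := fun n => \sum_(p <- L) p.2 * pairing R p.1 (A n).
have HJ : forall n, Rintegral (mu n) setT (simp R L) = J n.
  move=> n; rewrite Rint_simp /J; apply: eq_bigr => p _; by rewrite Hmu.
have sc : continuous (simp R L) by exact: simp_cont.
have := cJ L => /cvgrPdist_lt /(_ _ d0) HJl.
exists (lim (J @ \oo)).
change (\forall n \near \oo, ball (lim (J @ \oo)) e (Rintegral (mu n) setT h)).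
near=> n.
rewrite -ball_normE /=.
have E1 := est (mu n) (e / 3) hc sc (fun u => ltW (HL u)).
rewrite HJ distrC in E1.
have E2 : `|lim (J @ \oo) - J n| < e / 3 by near: n.
apply: le_lt_trans (ler_distD (J n) _ _) _.
apply: (lt_le_trans (ltr_leD E2 E1)).
have -> : e / 3 + e / 3 = e * (2 / 3) by field.
apply: ler_piMr; first exact: ltW.
by rewrite ler_pdivrMr // mul1r ler_nat.
Unshelve. all: by end_near.
Qed.
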